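(* Consider the distributed quantized weight-balancing algorithm described in the context on a strongly connected digraph, with step-size $\gamma(k)=2^{-n}$ for $2^n-1\le k\le 2^{n+1}-2$. For every $k\in\mathbb{Z}_+$: if the decreasing event $\mathcal{D}_k$ occurs then $\Vert\boldsymbol{\epsilon}(k+1)\Vert_1\le\Vert\boldsymbol{\epsilon}(k)\Vert_1-2\gamma(k)$, and otherwise $\Vert\boldsymbol{\epsilon}(k+1)\Vert_1=\Vert\boldsymbol{\epsilon}(k)\Vert_1$.
   Context: $\mathcal{G}=(\mathcal{V},\mathcal{E})$, $\mathcal{V}=\{1,\dots,N\}$, no self-loops; $\mathcal{N}_i^-=\{j:(j,i)\in\mathcal{E}\}$, $\mathcal{N}_i^+=\{j:(i,j)\in\mathcal{E}\}$, $d_i^+=|\mathcal{N}_i^+|$. Algorithm: $a_{ij}(0)=1$ if $j\in\mathcal{N}_i^-$ and $0$ otherwise; $b_i(k)=\sum_{j\in\mathcal{N}_i^-}a_{ij}(k)-\sum_{j\in\mathcal{N}_i^+}a_{ji}(k)$; $n_i(k)=1$ if $b_i(k)\ge d_i^+\gamma(k)$, else $0$; $a_{ij}(k+1)=a_{ij}(k)+n_j(k)\gamma(k)$ for $j\in\mathcal{N}_i^-$. $\boldsymbol{\epsilon}(k)=(|b_i(k)|)_{i=1}^N$. The decreasing event $\mathcal{D}_k$: there exist $i\in\mathcal{V}$ and $j\in\mathcal{N}_i^+$ with $n_i(k)>0$ and $b_j(k)<0$. *)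

(* Defs.v *)
From mathcomp Require Import all_boot all_order all_algebra.
Set Implicit Arguments. Unset Strict Implicit. Unset Printing Implicit Defensive.
Import Order.TTheory GRing.Theory Num.Theory.
Local Open Scope ring_scope.

Section Alg.
Variables (R : realFieldType) (N : nat) (e : rel 'I_N).

Definition outdeg (i : 'I_N) : nat := #|[set j | e i j]|.

(* step size gamma(k) = 2^{-n} for 2^n - 1 <= k <= 2^{n+1} - 2,
   i.e. n = floor(log2 (k+1)) *)
Definition gamma (k : nat) : R := (2%:R ^+ trunc_log 2 k.+1)^-1.

Definition imbalance (a : 'I_N -> 'I_N -> R) (i : 'I_N) : R :=
  \sum_(j | e j i) a i j - \sum_(j | e i j) a j i.

Definition nflag (g : R) (a : 'I_N -> 'I_N -> R) (i : 'I_N) : bool :=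
  (outdeg i)%:R * g <= imbalance a i.

Fixpoint weights (k : nat) : 'I_N -> 'I_N -> R :=
  match k with
  | 0 => fun i j => if e j i then 1 else 0
  | k'.+1 => let a := weights k' in
      fun i j => if e j i then a i j + (if nflag (gamma k') a j then gamma k' else 0)
                 else a i j
  end.

Definition b (k : nat) (i : 'I_N) : R := imbalance (weights k) i.
Definition nk (k : nat) (i : 'I_N) : bool := nflag (gamma k) (weights k) i.

Definition eps_norm1 (k : nat) : R := \sum_i `|b k i|.

Definition decreasing_event (k : nat) : Prop :=
  exists i j, [/\ e i j, nk k i & b k j < 0].

End Alg.

Definition no_self_loops (N : nat) (e : rel 'I_N) : Prop := forall i, ~~ e i i.
Definition strongly_connected (N : nat) (e : rel 'I_N) : Prop :=
  forall i j, connect e i j.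

(* Main.v *)
Require Import Defs.
From mathcomp Require Import all_boot all_order all_algebra.
From mathcomp Require Import ring lra zify.
Import Order.TTheory GRing.Theory Num.Theory.
Local Open Scope ring_scope.

Section Proofs.
Variables (R : realFieldType) (N : nat) (e : rel 'I_N).

Lemma gamma_gt0 k : 0 < gamma R k.
Proof. by rewrite /gamma invr_gt0 exprn_gt0 // ltr0n. Qed.

Lemma gamma_step k : exists m : nat, gamma R k = 2%:R ^+ m * gamma R k.+1.
Proof.
rewrite /gamma.
have le := leq_trunc_log 2 (leqnSn k.+1).
exists (trunc_log 2 k.+2 - trunc_log 2 k.+1)%N.
rewrite -{2}(subnK le) exprD invfM mulrA mulfV ?mul1r //.
by rewrite expf_neq0 // pnatr_eq0.
Qed.

Lemma weightsS k i j : weights R e k.+1 i j =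
  if e j i then weights R e k i j + (if nk R e k j then gamma R k else 0)
  else weights R e k i j.
Proof. by []. Qed.

Lemma weights_int k i j : exists z : int, weights R e k i j = z%:~R * gamma R k.
Proof.
elim: k i j => [|k IH] i j.
  rewrite /gamma /= trunc_log1 expr0 invr1.
  case: (e j i); [exists 1 | exists 0]; by rewrite mulr1.
have [m hm] := gamma_step k.
have [z hz] := IH i j.
rewrite weightsS hz hm.
case: (e j i); last first.
  by exists (z * 2 ^+ m); rewrite rmorphM rmorphXn /= mulrA.
case: (nk R e k j).
  by exists (z * 2 ^+ m + 2 ^+ m); rewrite rmorphD rmorphM rmorphXn /=; ring.
by exists (z * 2 ^+ m); rewrite rmorphM rmorphXn /=; ring.
Qed.

Lemma sum_int (g : R) (P : pred 'I_N) (F : 'I_N -> R) :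
  (forall j, exists z : int, F j = z%:~R * g) ->
  exists z : int, \sum_(j | P j) F j = z%:~R * g.
Proof.
move=> H; elim/big_rec: _ => [|j x Pj [z ->]]; first by exists 0; rewrite mul0r.
by have [w ->] := H j; exists (w + z); rewrite rmorphD mulrDl.
Qed.

Lemma b_int k i : exists z : int, b R e k i = z%:~R * gamma R k.
Proof.
rewrite /b /imbalance.
have [z1 ->] := @sum_int _ (fun j => e j i) _ (fun j => weights_int k i j).
have [z2 ->] := @sum_int _ (fun j => e i j) _ (fun j => weights_int k j i).
by exists (z1 - z2); rewrite rmorphB mulrBl.
Qed.

Lemma b_neg k i : b R e k i < 0 -> b R e k i <= - gamma R k.
Proof.
have [z ->] := b_int k i; have g0 := gamma_gt0 k.
rewrite pmulr_llt0 // ltrz0 => hz.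
have : z <= -1 by lia.
rewrite -(ler_int R) => h.
have : z%:~R * gamma R k <= (-1 : int)%:~R * gamma R k by rewrite ler_wpM2r // ltW.
by rewrite mulN1r.
Qed.

Definition inc k i := \sum_(j | e j i) (if nk R e k j then gamma R k else 0).
Definition dec k i := \sum_(j | e i j) (if nk R e k i then gamma R k else 0).

Lemma bS k i : b R e k.+1 i = b R e k i + inc k i - dec k i.
Proof.
rewrite /b /imbalance /inc /dec.
under eq_bigr => j eji do rewrite weightsS eji.
under [X in _ - X = _]eq_bigr => j eij do rewrite weightsS eij.
rewrite !big_split /=; ring.
Qed.

Lemma sum_inc_dec k : \sum_i inc k i = \sum_i dec k i.
Proof.
rewrite /inc /dec.
under eq_bigr => i _ do rewrite big_mkcond /=.
under [RHS]eq_bigr => i _ do rewrite big_mkcond /=.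
by rewrite exchange_big.
Qed.

Lemma dec_val k i : dec k i = if nk R e k i then (outdeg e i)%:R * gamma R k else 0.
Proof.
rewrite /dec; case: (nk R e k i); last by rewrite big1.
rewrite sumr_const /outdeg cardsE mulr_natl //.
Qed.


Lemma pointwise (bi inc dec g : R) (n : bool) :
  0 < g -> 0 <= inc -> (n -> dec <= bi) -> (~~ n -> dec = 0) -> 0 <= dec ->
  (bi < 0 -> bi <= - g) ->
  let r := `|bi| + inc - dec - `|bi + inc - dec| in
  [/\ 0 <= r, (bi < 0 -> g <= inc -> 2%:R * g <= r) &
     (~ (bi < 0 /\ 0 < inc) -> r = 0)].
Proof.
move=> g0 i0 hn hnn d0 hneg r; rewrite /r.
case: n hn hnn => [/(_ isT) hd _ | _ /(_ isT) ->].
  have b0 : 0 <= bi by lra.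
  rewrite (ger0_norm b0) ger0_norm; last by lra.
  split; [lra | lra | lra].
rewrite !subr0.
have [b0|b0] := lerP 0 bi.
  rewrite (ger0_norm b0) ger0_norm; last by lra.
  split; [lra | lra | lra].
rewrite (ltr0_norm b0); have := hneg b0 => hb.
have [c0|c0] := lerP 0 (bi + inc).
  rewrite (ger0_norm c0); split; [lra | lra | ].
  move=> H; have : ~~ (0 < inc) by apply/negP => h; apply: H; split.
  rewrite -leNgt => ?.
  lra.
rewrite (ltr0_norm c0); split; [lra | lra | ].
move=> H; have : ~~ (0 < inc) by apply/negP => h; apply: H; split.
rewrite -leNgt => ?.
lra.
Qed.


Definition rr k i := `|b R e k i| + inc k i - dec k i - `|b R e k.+1 i|.

Lemma rr_facts k i : [/\ 0 <= rr k i,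
  (b R e k i < 0 -> gamma R k <= inc k i -> 2%:R * gamma R k <= rr k i) &
  (~ (b R e k i < 0 /\ 0 < inc k i) -> rr k i = 0)].
Proof.
rewrite /rr bS.
apply: (@pointwise _ _ _ _ (nk R e k i)).
- exact: gamma_gt0.
- by apply: sumr_ge0 => j _; case: ifP => // _; exact: ltW (gamma_gt0 k).
- by move=> h; rewrite dec_val h; exact h.
- by rewrite dec_val => /negbTE ->.
- rewrite dec_val; case: ifP => // _; apply: mulr_ge0 => //; exact: ltW (gamma_gt0 k).
- exact: b_neg.
Qed.

Lemma sum_rr k : eps_norm1 R e k.+1 = eps_norm1 R e k - \sum_i rr k i.
Proof.
rewrite /eps_norm1 /rr !sumrB big_split /= sum_inc_dec.
set A := \sum_i _; set B := \sum_i _; set C := \sum_i _; ring.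
Qed.

End Proofs.

Theorem lemma1 (R : realFieldType) (N : nat) (e : rel 'I_N)
    (Hloop : no_self_loops e) (Hsc : strongly_connected e) (k : nat) :
  (decreasing_event R e k ->
     eps_norm1 R e k.+1 <= eps_norm1 R e k - 2%:R * gamma R k) /\
  (~ decreasing_event R e k -> eps_norm1 R e k.+1 = eps_norm1 R e k).
Proof.
rewrite sum_rr; split.
  move=> [i [j [eij ni bj]]].
  have [_ H _] := @rr_facts R N e k j.
  have Hinc : gamma R k <= @inc R N e k j.
    rewrite /inc (bigD1 i) //= ni lerDl.
    by apply: sumr_ge0 => l _; case: ifP => // _; exact: ltW (gamma_gt0 R k).
  have := H bj Hinc.
  have : @rr R N e k j <= \sum_i0 @rr R N e k i0.
    rewrite (bigD1 j) //= lerDl; apply: sumr_ge0 => l _.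
    by have [] := @rr_facts R N e k l.
  move=> h1 h2; rewrite lerD2l lerN2; exact: le_trans h2 h1.
move=> nD.
rewrite big1 ?subr0 // => i _.
have [_ _ H] := @rr_facts R N e k i; apply: H => -[bi ipos].
case: (pickP (fun l => e l i && nk R e k l)) => [l /andP [eli nl] | none].
  by apply: nD; exists l, i; split.
move: ipos; rewrite /inc big1 ?ltxx // => l eli.
by have := none l; rewrite /= eli /= => /negbT/negbTE ->.
Qed.
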